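(* The formal Burau group $\mathcal{B}$ equals Salter's group $\Gamma$; that is, every $A\in\mathcal{B}$ satisfies that $A|_{t=1}$ is a $3\times3$ permutation matrix.
   Context: For a matrix $A$ with Laurent polynomial entries, $\overline{A}$ denotes substitution $t\mapsto t^{-1}$ in every entry. Let $J_3=\begin{pmatrix}1&-t^{-1}&-t^{-1}\\-t&1&-t^{-1}\\-t&-t&1\end{pmatrix}$, $v=(t,t^2,t^3)$ (a row vector), $\vec{1}=(1,1,1)^T$. The formal Burau group is $\mathcal{B}=\{A\in\mathrm{GL}(3,\mathbb{Z}[t,t^{-1}]) : vA=v,\ A\vec 1=\vec 1,\ \overline{A}J_3A^T=J_3\}$, and Salter's group is $\Gamma=\{A\in\mathcal{B}: A|_{t=1}\text{ is a }3\times 3\text{ permutation matrix}\}$. *)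

(* Defs.v *)
From HB Require Import structures.
From mathcomp Require Import all_boot all_order all_algebra all_fingroup.
From mathcomp Require Export fraction.
Set Implicit Arguments. Unset Strict Implicit. Unset Printing Implicit Defensive.
Import Order.TTheory GRing.Theory Num.Theory.
Local Open Scope ring_scope.

(* Ambient field: Q(t) = fraction field of Z[t]; Z[t,t^-1] sits inside it. *)
Definition K : fieldType := {fraction {poly int}}.
Definition T : K := tofrac ('X : {poly int}).

Definition ev (p : {poly int}) (x : K) : K := (map_poly (fun c : int => c%:~R) p).[x].

(* The Laurent polynomial t^{-n} p(t), as an element of K ... *)
Definition lau (n : nat) (p : {poly int}) : K := ev p T / T ^+ n.
(* ... and its image under t |-> t^{-1}, i.e. t^{n} p(t^{-1}). *)
Definition laubar (n : nat) (p : {poly int}) : K := ev p T^-1 * T ^+ n.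

(* Every matrix over Z[t,t^-1] is t^{-n} M for some n and M over Z[t]. *)
Definition LM (n : nat) (M : 'M[{poly int}]_3) : 'M[K]_3 :=
  \matrix_(i, j) lau n (M i j).
Definition LMbar (n : nat) (M : 'M[{poly int}]_3) : 'M[K]_3 :=
  \matrix_(i, j) laubar n (M i j).

Definition J3 : 'M[K]_3 :=
  \matrix_(i, j) if i == j then 1 else if (i < j)%N then - T^-1 else - T.
Definition vB : 'rV[K]_3 := \row_(j < 3) T ^+ j.+1.
Definition one3 : 'cV[K]_3 := const_mx 1.

Definition in_GL_laurent (n : nat) (M : 'M[{poly int}]_3) : Prop :=
  exists (m : nat) (N : 'M[{poly int}]_3),
    LM n M *m LM m N = 1%:M /\ LM m N *m LM n M = 1%:M.

Definition in_formal_Burau (n : nat) (M : 'M[{poly int}]_3) : Prop :=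
  [/\ in_GL_laurent n M,
      vB *m LM n M = vB,
      LM n M *m one3 = one3 &
      LMbar n M *m J3 *m (LM n M)^T = J3].

(* (t^{-n} M)|_{t=1} = M|_{t=1} since 1^{-n} = 1 *)
Definition at_one (M : 'M[{poly int}]_3) : 'M[int]_3 := map_mx (fun p => p.[1]) M.

(* Main.v *)
Require Import Defs.
From HB Require Import structures.
From mathcomp Require Import all_boot all_order all_algebra all_fingroup.
From mathcomp Require Import zify ring.
Set Implicit Arguments. Unset Strict Implicit. Unset Printing Implicit Defensive.
Import Order.TTheory GRing.Theory Num.Theory.
Local Open Scope ring_scope.

Definition E (x : K) (r : rat) : Prop :=
  exists a b : {poly int}, [/\ b.[1] != 0, x = tofrac a / tofrac b &
     r = (a.[1])%:~R / (b.[1])%:~R].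

Lemma tofrac_neq0 (b : {poly int}) : b.[1] != 0 -> tofrac b != 0 :> K.
Proof.
move=> hb; rewrite tofrac_eq0; apply: contra hb => /eqP ->; by rewrite horner0.
Qed.

Lemma intr_neq0 (z : int) : z != 0 -> (z%:~R : rat) != 0.
Proof. by rewrite intr_eq0. Qed.

Lemma E_fun x r r' : E x r -> E x r' -> r = r'.
Proof.
move=> [a [b [hb -> ->]]] [c [d [hd e ->]]].
have hb' := tofrac_neq0 hb; have hd' := tofrac_neq0 hd.
move/eqP: e; rewrite eqr_div // -!tofracM tofrac_eq => /eqP /(congr1 (horner^~ 1)).
rewrite !hornerM => e.
apply/eqP; rewrite eqr_div ?intr_neq0 // -!intrM e //.
Qed.

Lemma E_poly (p : {poly int}) : E (tofrac p) (p.[1])%:~R.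
Proof.
exists p, 1; split; first by rewrite hornerC oner_neq0.
  by rewrite tofrac1 divr1.
by rewrite hornerC divr1.
Qed.

Lemma E_int (z : int) : E (z%:~R) (z%:~R).
Proof.
have := E_poly (z%:~R : {poly int}); by rewrite horner_int rmorph_int intz.
Qed.

Lemma E_add x y r s : E x r -> E y s -> E (x + y) (r + s).
Proof.
move=> [a [b [hb -> ->]]] [c [d [hd -> ->]]].
have hb' := tofrac_neq0 hb; have hd' := tofrac_neq0 hd.
exists (a * d + c * b), (b * d); split.
- by rewrite hornerM mulf_neq0.
- by rewrite tofracD !tofracM addf_div.
- by rewrite hornerD !hornerM !intrD !intrM addf_div ?intr_neq0.
Qed.

Lemma E_mul x y r s : E x r -> E y s -> E (x * y) (r * s).
Proof.
move=> [a [b [hb -> ->]]] [c [d [hd -> ->]]].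
have hb' := tofrac_neq0 hb; have hd' := tofrac_neq0 hd.
exists (a * c), (b * d); split.
- by rewrite hornerM mulf_neq0.
- by rewrite !tofracM mulf_div.
- by rewrite !hornerM !intrM mulf_div.
Qed.

Lemma E_opp x r : E x r -> E (- x) (- r).
Proof.
move=> h; have := E_mul (E_int (-1)) h.
by rewrite !mulNr !mul1r.
Qed.

Lemma E_inv x r : E x r -> r != 0 -> E x^-1 r^-1.
Proof.
move=> [a [b [hb -> ->]]] hr.
have ha : a.[1] != 0 by apply: contra hr => /eqP ->; rewrite mul0r.
exists b, a; split => //; by rewrite invf_div.
Qed.

Lemma E_exp x r n : E x r -> E (x ^+ n) (r ^+ n).
Proof.
move=> h; elim: n => [|n IH]; first by rewrite !expr0; exact: (E_int 1).
by rewrite !exprS; apply: E_mul.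
Qed.

Lemma E_T : E T 1.
Proof. have := E_poly 'X; by rewrite hornerX. Qed.

Lemma E_Tinv : E T^-1 1.
Proof. have := E_inv E_T (oner_neq0 _); by rewrite invr1. Qed.

Lemma E_ev p x : E x 1 -> E (ev p x) (p.[1])%:~R.
Proof.
move=> hx; elim/poly_ind: p => [|p c IH].
  rewrite /ev map_poly0 horner0 horner0; exact: (E_int 0).
rewrite /ev rmorphD rmorphM /= map_polyX map_polyC /= !hornerE.
rewrite intrD; apply: E_add; last exact: E_int.
by rewrite -[X in E _ X]mulr1; apply: E_mul.
Qed.

Lemma E_sum k (F : 'I_k -> K) (G : 'I_k -> rat) :
  (forall i, E (F i) (G i)) -> E (\sum_i F i) (\sum_i G i).
Proof.
move=> h; apply: (big_ind2 E) => //; last by move=> *; apply: E_add.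
by have := E_int 0.
Qed.

Definition EM m n (X : 'M[K]_(m, n)) (Y : 'M[rat]_(m, n)) :=
  forall i j, E (X i j) (Y i j).

Lemma EM_fun m n X (Y Y' : 'M[rat]_(m, n)) : EM X Y -> EM X Y' -> Y = Y'.
Proof. move=> h h'; apply/matrixP => i j; exact: E_fun (h i j) (h' i j). Qed.

Lemma EM_mul m n p X Y X' Y' : @EM m n X Y -> @EM n p X' Y' -> EM (X *m X') (Y *m Y').
Proof.
move=> h h' i j; rewrite !mxE; apply: E_sum => k; exact: E_mul.
Qed.

Lemma EM_tr m n X Y : @EM m n X Y -> EM X^T Y^T.
Proof. by move=> h i j; rewrite !mxE. Qed.

Definition A1 (M : 'M[{poly int}]_3) : 'M[rat]_3 := map_mx (fun p => (p.[1])%:~R) M.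

Lemma EM_LM n M : EM (LM n M) (A1 M).
Proof.
move=> i j; rewrite !mxE /lau.
have h1 : (1 : rat) ^+ n != 0 by rewrite expr1n oner_neq0.
have := E_mul (E_ev (M i j) E_T) (E_inv (E_exp n E_T) h1).
by rewrite expr1n invr1 mulr1.
Qed.

Lemma EM_LMbar n M : EM (LMbar n M) (A1 M).
Proof.
move=> i j; rewrite !mxE /laubar.
have := E_mul (E_ev (M i j) E_Tinv) (E_exp n E_T).
by rewrite expr1n mulr1.
Qed.

Definition J1 : 'M[rat]_3 := \matrix_(i, j) if i == j then 1 else -1.

Lemma EM_J : EM J3 J1.
Proof.
move=> i j; rewrite !mxE; case: (i == j); first exact: (E_int 1).
by case: (i < j)%N; apply: E_opp; [exact: E_Tinv | exact: E_T].
Qed.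

Lemma EM_one : EM one3 (const_mx 1).
Proof. move=> i j; rewrite !mxE; exact: (E_int 1). Qed.

Lemma J1E : J1 = 2%:M - const_mx 1 *m (const_mx 1 : 'cV[rat]_3)^T.
Proof.
apply/matrixP => i j; rewrite !mxE big_ord1 !mxE.
by case: (i == j) => //=; rewrite ?mulr1n ?mulr0n ?mulr1 // sub0r.
Qed.

Lemma perm_of_int (B : 'M[int]_3) :
  B *m B^T = 1%:M -> B *m (const_mx 1 : 'cV[int]_3) = const_mx 1 -> is_perm_mx B.
Proof.
move=> hBB hB1.
have hrow : forall i, {j : 'I_3 | [/\ true, B i j = 1 & forall k, k != j -> true -> B i k = 0]}.
  move=> i.
  have hsq : \sum_k B i k * B i k = 1.
    by move/matrixP: (hBB) => /(_ i i); rewrite !mxE eqxx mulr1n => <-; apply: eq_bigr => l _; rewrite mxE.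
  have hs : \sum_k B i k = 1.
    by move/matrixP: (hB1) => /(_ i ord0); rewrite !mxE => <-; apply: eq_bigr => l _; rewrite mxE mulr1.
  have h0 : \sum_k (B i k * B i k - B i k) = 0 by rewrite sumrB hsq hs subrr.
  have h01 : forall k, B i k * B i k - B i k = 0.
    move=> k; apply: (psumr_eq0P _ h0) => // l _.
    set x := B i l; nia.
  apply: natr_sum_eq1 => // k _.
  have := h01 k; set x := B i k => hx.
  have : (x == 0) || (x == 1).
    have : x * (x - 1) == 0 by rewrite mulrBr mulr1 hx.
    by rewrite mulf_eq0 subr_eq0.
  by case/orP => /eqP ->; [apply: rpred0 | apply: rpred1].
pose s := fun i => sval (hrow i).
have hs i k : B i k = (s i == k)%:R.
  rewrite /s; case: (hrow i) => j [_ h1 h2] /=.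
  case: eqVneq => [<- //|]; rewrite eq_sym => hk; exact: h2.
have sinj : injective s.
  move=> i k e; apply/eqP.
  move/matrixP: hBB => /(_ i k); rewrite !mxE.
  rewrite (bigD1 (s i)) //= big1 ?addr0; last first.
    by move=> l hl; rewrite mxE hs eq_sym (negPf hl) mul0r.
  rewrite mxE hs eqxx mul1r hs e eqxx.
  by case: (i == k).
apply/is_perm_mxP; exists (perm sinj).
apply/matrixP => i j; rewrite /perm_mx !mxE permE hs.
by [].
Qed.

Theorem lemma3p15 (n : nat) (M : 'M[{poly int}]_3) :
  in_formal_Burau n M -> is_perm_mx (at_one M).
Proof.
case=> _ _ h3 h4.
set A := A1 M.
set u := (const_mx 1 : 'cV[rat]_3).
have hA1 : A *m u = u.
  apply: (EM_fun (X := one3)); last exact: EM_one.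
  by rewrite -h3; apply: EM_mul; [exact: EM_LM | exact: EM_one].
have hJ : A *m J1 *m A^T = J1.
  apply: (EM_fun (X := J3)); last exact: EM_J.
  rewrite -h4; apply: EM_mul; last by apply: EM_tr; exact: EM_LM.
  apply: EM_mul; [exact: EM_LMbar | exact: EM_J].
have hAA : A *m A^T = 1%:M.
  move: hJ; rewrite J1E mulmxBr mulmxBl mul_mx_scalar -scalemxAl -!mulmxA.
  rewrite /u in hA1; rewrite !mulmxA -[A *m _ *m _ *m A^T]mulmxA -trmx_mul hA1 => /eqP.
  rewrite -subr_eq0 opprB addrA subrK subr_eq0 -scalemx1 => /eqP h.
  by apply: (scalerI (a := 2)) => //; rewrite h.
have hAB : A = map_mx intr (at_one M) by apply/matrixP => i j; rewrite !mxE.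
apply: perm_of_int.
  have : map_mx intr (at_one M *m (at_one M)^T) = map_mx intr (1%:M : 'M[int]_3) :> 'M[rat]_3.
    by rewrite map_mxM -map_trmx map_mx1 -hAB.
  move/matrixP => h; apply/matrixP => i j; move: (h i j).
  by rewrite [LHS]mxE [RHS]mxE => /eqP; rewrite eqr_int => /eqP.
have : map_mx intr (at_one M *m const_mx 1) = map_mx intr (const_mx 1 : 'cV[int]_3) :> 'cV[rat]_3.
  by rewrite map_mxM !map_const_mx /= -hAB.
move/matrixP => h; apply/matrixP => i j; move: (h i j).
by rewrite [LHS]mxE [RHS]mxE => /eqP; rewrite eqr_int => /eqP.
Qed.
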